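(* The conditional rewriting system $R$ is confluent.
   Context: Terms are built from variables and the constants $C,T,F,K,S$ by binary application (left-associative). $\mathrm{CLC}$ is the conditional system with rules $C\,T\,x\,y\to x$; $C\,F\,x\,y\to y$; $C\,z\,x\,y\to x \Leftarrow x=y$; $K\,x\,y\to x$; $S\,x\,y\,z\to x\,z\,(y\,z)$, where $=$ is convertibility in the system itself, defined by levels ($R_0$: condition empty; $R_{n+1}$: $=$ is conversion of $\to_{R_n}$; $\to_{\mathrm{CLC}}=\bigcup_n\to_{R_n}$); $=_{\mathrm{CLC}}$ is conversion in $\mathrm{CLC}$. $R$ is the conditional rewriting system (closed under contexts) with rules: $C\,T\,x\,y\to x$; $C\,z\,x\,y\to y \Leftarrow z=_{\mathrm{CLC}}F$; $C\,z\,x\,y\to x\Leftarrow z\neq_{\mathrm{CLC}}F \wedge x=_{\mathrm{CLC}}y$; $K\,x\,y\to x$; $S\,x\,y\,z\to x\,z\,(y\,z)$. *)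

(* Defs.v *)
From Stdlib Require Import Relations.

Inductive term : Type :=
| Var : nat -> term
| Ct : term
| Tt : term
| Ft : term
| Kt : term
| St : term
| App : term -> term -> term.

(* One-step rewriting of the CLC rules, closed under contexts, where the
   condition of the conditional rule C z x y -> x <= x = y is interpreted
   by the relation E. *)
Inductive clc_step_with (E : term -> term -> Prop) : term -> term -> Prop :=
| clc_CT : forall x y, clc_step_with E (App (App (App Ct Tt) x) y) x
| clc_CF : forall x y, clc_step_with E (App (App (App Ct Ft) x) y) y
| clc_Ceq : forall z x y, E x y -> clc_step_with E (App (App (App Ct z) x) y) x
| clc_K : forall x y, clc_step_with E (App (App Kt x) y) x
| clc_S : forall x y z,
    clc_step_with E (App (App (App St x) y) z) (App (App x z) (App y z))
| clc_appL : forall s s' t, clc_step_with E s s' -> clc_step_with E (App s t) (App s' t)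
| clc_appR : forall s t t', clc_step_with E t t' -> clc_step_with E (App s t) (App s t').

(* Levels: R_0 has empty condition (never satisfied);
   R_{n+1} interprets = as convertibility of ->_{R_n}. *)
Fixpoint clc_level (n : nat) : term -> term -> Prop :=
  match n with
  | O => clc_step_with (fun _ _ => False)
  | S m => clc_step_with (clos_refl_sym_trans term (clc_level m))
  end.

Definition clc_step (s t : term) : Prop := exists n, clc_level n s t.

Definition clc_conv : term -> term -> Prop := clos_refl_sym_trans term clc_step.

Inductive R_step : term -> term -> Prop :=
| R_CT : forall x y, R_step (App (App (App Ct Tt) x) y) x
| R_CF : forall z x y, clc_conv z Ft -> R_step (App (App (App Ct z) x) y) y
| R_Ceq : forall z x y, ~ clc_conv z Ft -> clc_conv x y ->
    R_step (App (App (App Ct z) x) y) x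
| R_K : forall x y, R_step (App (App Kt x) y) x
| R_S : forall x y z, R_step (App (App (App St x) y) z) (App (App x z) (App y z))
| R_appL : forall s s' t, R_step s s' -> R_step (App s t) (App s' t)
| R_appR : forall s t t', R_step t t' -> R_step (App s t) (App s t').

Definition R_red : term -> term -> Prop := clos_refl_trans term R_step.

Definition confluent_rel (r : term -> term -> Prop) : Prop :=
  forall a b c, clos_refl_trans term r a b -> clos_refl_trans term r a c ->
    exists d, clos_refl_trans term r b d /\ clos_refl_trans term r c d.

(* Main.v *)
Require Import Defs.
From Stdlib Require Import Relations.
From Stdlib Require Import Classical Lia List.

(* ---------- Engeler-style model to prove consistency of CLC ---------- *)
Inductive B : Type := atom : nat -> B | arr : list B -> B -> B.
Definition set := B -> Prop.
Definition incl (l : list B) (X : set) := forall e, In e l -> X e.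
Definition app (X Y : set) : set := fun b => exists l, incl l Y /\ X (arr l b).
Definition Kset : set := fun b => match b with
 | arr l (arr _ c) => In c l | _ => False end.
Definition Sset : set := fun b => match b with
 | arr a (arr p (arr q c)) => exists be de, In (arr de (arr be c)) a /\
      (forall e, In e de -> In e q) /\
      (forall e, In e be -> exists g, (forall u, In u g -> In u q) /\ In (arr g e) p)
 | _ => False end.
Definition Cset : set := fun b => match b with
 | arr z (arr x (arr y c)) =>
   (In (atom 0) z /\ x = c::nil /\ y = nil) \/
   (In (atom 1) z /\ x = nil /\ y = c::nil) \/
   (z = nil /\ x = c::nil /\ y = c::nil)
 | _ => False end.

Fixpoint I (t : term) : set :=
  match t with
  | Var _ => fun _ => False
  | Ct => Cset
  | Tt => fun b => b = atom 0
  | Ft => fun b => b = atom 1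
  | Kt => Kset
  | St => Sset
  | App s u => app (I s) (I u)
  end.

Definition eqs (X Y : set) := forall b, X b <-> Y b.

Lemma app_morph X X' Y Y' : eqs X X' -> eqs Y Y' -> eqs (app X Y) (app X' Y').
Proof.
  intros HX HY b; unfold app; split; intros [l [Hl Hb]]; exists l; split;
  try (intros e He; apply HY; auto); try (apply HX; auto).
Qed.

Lemma K_eq X Y : eqs (app (app Kset X) Y) X.
Proof.
  intro b; unfold app; split.
  - intros [l [_ [l2 [H2 H]]]]. simpl in H. apply H2; auto.
  - intros Hb. exists nil. split. intros e []. exists (b::nil). split.
    intros e [<-|[]]; auto. simpl; auto.
Qed.

Lemma C_eq X Y Z b : app (app (app Cset Z) X) Y b <->
  (Z (atom 0) /\ X b) \/ (Z (atom 1) /\ Y b) \/ (X b /\ Y b).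
Proof.
  unfold app; split.
  - intros [ly [Hy [lx [Hx [lz [Hz H]]]]]]. simpl in H.
    destruct H as [[H1 [-> ->]]|[[H1 [-> ->]]|[-> [-> ->]]]].
    + left; split; auto. apply Hx; simpl; auto.
    + right; left; split; auto. apply Hy; simpl; auto.
    + right; right; split; [apply Hx|apply Hy]; simpl; auto.
  - intros [[H1 H2]|[[H1 H2]|[H1 H2]]].
    + exists nil; split. intros e []. exists (b::nil); split.
      intros e [<-|[]]; auto. exists (atom 0 :: nil); split.
      intros e [<-|[]]; auto. simpl; left; auto.
    + exists (b::nil); split. intros e [<-|[]]; auto. exists nil; split.
      intros e []. exists (atom 1 :: nil); split.
      intros e [<-|[]]; auto. simpl; right; left; auto.
    + exists (b::nil); split. intros e [<-|[]]; auto. exists (b::nil); split.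
      intros e [<-|[]]; auto. exists nil; split. intros e [].
      simpl; right; right; auto.
Qed.

Lemma build (Y Z : set) : forall be,
  (forall e, In e be -> exists g, incl g Z /\ Y (arr g e)) ->
  exists p q, incl p Y /\ incl q Z /\
    forall e, In e be -> exists g, (forall u, In u g -> In u q) /\ In (arr g e) p.
Proof.
  induction be as [|e be IH]; intros H.
  - exists nil, nil; repeat split; try (intros ? []).
  - destruct (H e (or_introl eq_refl)) as [g [Hg HY]].
    destruct IH as [p [q [Hp [Hq Hb]]]]. intros e' He'; apply H; simpl; auto.
    exists (arr g e :: p), (g ++ q). split; [|split].
    + intros u [<-|Hu]; auto.
    + intros u Hu. apply in_app_or in Hu. destruct Hu; auto.
    + intros e' [<-|He'].
      * exists g; split. intros u Hu; apply in_or_app; auto. simpl; auto.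
      * destruct (Hb e' He') as [g' [Hg' Hin]]. exists g'; split.
        intros u Hu; apply in_or_app; auto. simpl; auto.
Qed.

Lemma S_eq X Y Z : eqs (app (app (app Sset X) Y) Z) (app (app X Z) (app Y Z)).
Proof.
  intro b; unfold app; split.
  - intros [lz [Hz [ly [Hy [lx [Hx H]]]]]]. simpl in H.
    destruct H as [be [de [H1 [H2 H3]]]].
    exists be. split.
    + intros e He. destruct (H3 e He) as [g [Hg Hin]].
      exists g; split. intros u Hu; apply Hz; auto. apply Hy; auto.
    + exists de; split. intros u Hu; apply Hz; auto. apply Hx; auto.
  - intros [be [Hbe [de [Hde HX]]]].
    destruct (build Y Z be Hbe) as [p [q [Hp [Hq Hb]]]].
    exists (de ++ q). split.
    { intros u Hu. apply in_app_or in Hu; destruct Hu; auto. }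
    exists p. split; auto.
    exists (arr de (arr be b) :: nil). split.
    { intros u [<-|[]]; auto. }
    simpl. exists be, de. split; [left; auto|split].
    + intros e He; apply in_or_app; auto.
    + intros e He. destruct (Hb e He) as [g [Hg Hin]]. exists g; split; auto.
      intros u Hu; apply in_or_app; auto.
Qed.

Lemma step_sound (E : term -> term -> Prop) :
  (forall x y, E x y -> eqs (I x) (I y)) ->
  forall s t, clc_step_with E s t -> eqs (I s) (I t).
Proof.
  intros HE s t H; induction H; simpl.
  - intro b. rewrite C_eq. simpl. intuition discriminate.
  - intro b. rewrite C_eq. simpl. intuition discriminate.
  - intro b. rewrite C_eq. specialize (HE _ _ H b). intuition.
  - apply K_eq.
  - apply S_eq.
  - apply app_morph; auto. intro; tauto.
  - apply app_morph; auto. intro; tauto.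
Qed.

Lemma level_sound : forall n s t, clc_level n s t -> eqs (I s) (I t).
Proof.
  induction n; simpl; intros s t H.
  - eapply step_sound; [|exact H]. intros _ _ [].
  - eapply step_sound; [|exact H]. intros x y Hxy.
    induction Hxy.
    + auto.
    + intro; tauto.
    + intro b; specialize (IHHxy b); tauto.
    + intro b; specialize (IHHxy1 b); specialize (IHHxy2 b); tauto.
Qed.

Lemma conv_sound s t : clc_conv s t -> eqs (I s) (I t).
Proof.
  intro H; induction H.
  - destruct H as [n Hn]; eapply level_sound; eauto.
  - intro; tauto.
  - intro b; specialize (IHclos_refl_sym_trans b); tauto.
  - intro b; specialize (IHclos_refl_sym_trans1 b); specialize (IHclos_refl_sym_trans2 b); tauto.
Qed.

Lemma consistent : ~ clc_conv Tt Ft.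
Proof.
  intro H. apply conv_sound in H. specialize (H (atom 0)). simpl in H.
  destruct H as [H _]. specialize (H eq_refl). discriminate.
Qed.

Lemma conv_appL s s' t : clc_conv s s' -> clc_conv (App s t) (App s' t).
Proof.
  intro H; induction H.
  - apply rst_step. destruct H as [n Hn]. exists n. destruct n; simpl in *; apply clc_appL; auto.
  - apply rst_refl.
  - apply rst_sym; auto.
  - eapply rst_trans; eauto.
Qed.

Lemma conv_appR s t t' : clc_conv t t' -> clc_conv (App s t) (App s t').
Proof.
  intro H; induction H.
  - apply rst_step. destruct H as [n Hn]. exists n. destruct n; simpl in *; apply clc_appR; auto.
  - apply rst_refl.
  - apply rst_sym; auto.
  - eapply rst_trans; eauto.
Qed.

Lemma Rstep_conv s t : R_step s t -> clc_conv s t.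
Proof.
  intro H; induction H.
  - apply rst_step; exists 0; simpl; apply clc_CT.
  - eapply rst_trans. apply conv_appL, conv_appL, conv_appR; eauto.
    apply rst_step; exists 0; simpl; apply clc_CF.
  - eapply rst_trans. apply conv_appR. apply rst_sym; exact H0.
    apply rst_step; exists 1; simpl; apply clc_Ceq. apply rst_refl.
  - apply rst_step; exists 0; simpl; apply clc_K.
  - apply rst_step; exists 0; simpl; apply clc_S.
  - apply conv_appL; auto.
  - apply conv_appR; auto.
Qed.

Lemma Rred_conv s t : R_red s t -> clc_conv s t.
Proof.
  intro H; induction H.
  - apply Rstep_conv; auto.
  - apply rst_refl.
  - eapply rst_trans; eauto.
Qed.

Lemma Rred_app s s' t t' : R_red s s' -> R_red t t' -> R_red (App s t) (App s' t').
Proof.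
  intros H1 H2. apply rt_trans with (App s' t).
  - induction H1. apply rt_step, R_appL; auto. apply rt_refl. eapply rt_trans; eauto.
  - induction H2. apply rt_step, R_appR; auto. apply rt_refl. eapply rt_trans; eauto.
Qed.

Inductive Par : term -> term -> Prop :=
| P_refl : forall a, Par a a
| P_app : forall s s' t t', Par s s' -> Par t t' -> Par (App s t) (App s' t')
| P_CT : forall x x' y, Par x x' -> Par (App (App (App Ct Tt) x) y) x'
| P_CF : forall z x y y', clc_conv z Ft -> Par y y' -> Par (App (App (App Ct z) x) y) y'
| P_Ceq : forall z x y x', ~ clc_conv z Ft -> clc_conv x y -> Par x x' ->
    Par (App (App (App Ct z) x) y) x'
| P_K : forall x x' y, Par x x' -> Par (App (App Kt x) y) x'
| P_S : forall x x' y y' z z', Par x x' -> Par y y' -> Par z z' ->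
    Par (App (App (App St x) y) z) (App (App x' z') (App y' z')).

Lemma Par_red a b : Par a b -> R_red a b.
Proof.
  intro H; induction H.
  - apply rt_refl.
  - apply Rred_app; auto.
  - eapply rt_trans; [apply rt_step, R_CT|auto].
  - eapply rt_trans; [apply rt_step, R_CF; auto|auto].
  - eapply rt_trans; [apply rt_step, R_Ceq; auto|auto].
  - eapply rt_trans; [apply rt_step, R_K|auto].
  - eapply rt_trans; [apply rt_step, R_S|]. apply Rred_app; apply Rred_app; auto.
Qed.

Lemma Par_conv a b : Par a b -> clc_conv a b.
Proof. intro; apply Rred_conv, Par_red; auto. Qed.

Lemma step_Par a b : R_step a b -> Par a b.
Proof.
  intro H; induction H.
  - apply P_CT, P_refl.
  - apply P_CF; auto; apply P_refl.
  - apply P_Ceq; auto; apply P_refl.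
  - apply P_K, P_refl.
  - apply P_S; apply P_refl.
  - apply P_app; auto; apply P_refl.
  - apply P_app; auto; apply P_refl.
Qed.

Lemma par_atom a b : Par a b -> (forall s t, a <> App s t) -> b = a.
Proof. intros H Ha; destruct H; auto; exfalso; eapply Ha; eauto. Qed.

Lemma par_1 h x b : Par (App h x) b -> (forall s t, h <> App s t) ->
  (forall u, h <> App (App Ct Tt) u) -> (forall z u, h <> App (App Ct z) u) ->
  (forall u, h <> App Kt u) -> (forall u v, h <> App (App St u) v) ->
  exists h' x', b = App h' x' /\ Par h h' /\ Par x x'.
Proof.
  intros H Ha _ Hc Hk Hs. inversion H; subst.
  - exists h, x; repeat split; apply P_refl.
  - eauto.
  - exfalso; eapply Hc; eauto.
  - exfalso; eapply Hc; eauto.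
  - exfalso; eapply Hc; eauto.
  - exfalso; eapply Hk; eauto.
  - exfalso; eapply Hs; eauto.
Qed.

Ltac atomc := let s := fresh in let t := fresh in intros s t; discriminate.

Lemma par_head1 c x b : Par (App c x) b -> (forall s t, c <> App s t) ->
  exists x', b = App c x' /\ Par x x'.
Proof.
  intros H Hc. inversion H; subst.
  - exists x; split; auto; apply P_refl.
  - exists t'; split; auto. f_equal. apply par_atom; auto.
  - exfalso; eapply Hc; eauto.
  - exfalso; eapply Hc; eauto.
  - exfalso; eapply Hc; eauto.
  - exfalso; eapply Hc; eauto.
  - exfalso; eapply Hc; eauto.
Qed.

Lemma par_head2 c z x b : Par (App (App c z) x) b -> (forall s t, c <> App s t) ->
  c <> Kt ->
  exists z' x', b = App (App c z') x' /\ Par z z' /\ Par x x'.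
Proof.
  intros H Hc Hk. inversion H; subst.
  { exists z, x; repeat split; apply P_refl. }
  { destruct (par_head1 _ _ _ H2 Hc) as [z' [-> Hz]]. eauto. }
  all: try congruence.
  all: exfalso; eapply Hc; eauto.
Qed.

Lemma par_K2 x y b : Par (App (App Kt x) y) b ->
  (exists x' y', b = App (App Kt x') y' /\ Par x x' /\ Par y y') \/ Par x b.
Proof.
  intro H. inversion H; subst.
  - left; exists x, y; repeat split; apply P_refl.
  - left. destruct (par_head1 _ _ _ H2 ltac:(atomc)) as [x' [-> Hx]]. eauto.
  - right; auto.
Qed.

Lemma par_S3 x y z b : Par (App (App (App St x) y) z) b ->
  exists x' y' z', Par x x' /\ Par y y' /\ Par z z' /\
   (b = App (App (App St x') y') z' \/ b = App (App x' z') (App y' z')).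
Proof.
  intro H. inversion H; subst.
  - exists x, y, z; repeat split; try apply P_refl; auto.
  - destruct (par_head2 _ _ _ _ H2 ltac:(atomc) ltac:(discriminate)) as [x' [y' [-> [Hx Hy]]]].
    exists x', y', t'; repeat split; auto.
  - exists x', y', z'; repeat split; auto.
Qed.

Lemma par_C3 z x y b : Par (App (App (App Ct z) x) y) b ->
  (exists z' x' y', b = App (App (App Ct z') x') y' /\ Par z z' /\ Par x x' /\ Par y y')
  \/ (z = Tt /\ Par x b) \/ (clc_conv z Ft /\ Par y b)
  \/ (~ clc_conv z Ft /\ clc_conv x y /\ Par x b).
Proof.
  intro H. inversion H; subst.
  - left; exists z, x, y; repeat split; apply P_refl.
  - left. destruct (par_head2 _ _ _ _ H2 ltac:(atomc) ltac:(discriminate)) as [z' [x' [-> [Hz Hx]]]].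
    exists z', x', t'; repeat split; auto.
  - right; left; auto.
  - right; right; left; auto.
  - right; right; right; auto.
Qed.

Fixpoint size (t : term) : nat :=
  match t with App s u => S (size s + size u) | _ => 1 end.

Definition tri (a : term) := exists a', Par a a' /\ forall b, Par a b -> Par b a'.

Lemma triangle : forall n a, size a < n -> tri a.
Proof.
  induction n; intros a Ha; [lia|].
  destruct a as [k| | | | | | s t];
  try solve [eexists; split; [apply P_refl|intros b Hb; rewrite (par_atom _ _ Hb ltac:(atomc)); apply P_refl]].
  simpl in Ha.
  destruct (classic (exists z x, s = App (App Ct z) x)) as [[z [x ->]]|Hc].
  { simpl in Ha.
    destruct (IHn z ltac:(lia)) as [z1 [Hz1 Hz]].
    destruct (IHn x ltac:(lia)) as [x1 [Hx1 Hx]].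
    destruct (IHn t ltac:(lia)) as [y1 [Hy1 Hy]].
    destruct (classic (clc_conv z Ft)) as [HF|HF].
    - exists y1; split. apply P_CF; auto.
      intros b Hb. destruct (par_C3 _ _ _ _ Hb) as [[z' [x' [y' [-> [H1 [H2 H3]]]]]]|[[-> _]|[[_ H]|[H _]]]].
      + apply P_CF; auto. eapply rst_trans; [apply rst_sym, Par_conv; eauto|auto].
      + exfalso; apply consistent; auto.
      + auto.
      + contradiction.
    - destruct (classic (z = Tt \/ clc_conv x t)) as [HT|HT].
      + exists x1; split.
        { destruct HT as [->|HT]. apply P_CT; auto. apply P_Ceq; auto. }
        intros b Hb. destruct (par_C3 _ _ _ _ Hb) as [[z' [x' [y' [-> [H1 [H2 H3]]]]]]|[[_ H]|[[H _]|[_ [_ H]]]]]; auto.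
        * destruct HT as [->|HT].
          -- rewrite (par_atom _ _ H1 ltac:(atomc)). apply P_CT; auto.
          -- apply P_Ceq; auto.
             ++ intro Hc; apply HF. eapply rst_trans; [apply Par_conv; eauto|auto].
             ++ eapply rst_trans; [apply rst_sym, Par_conv; eauto|].
                eapply rst_trans; [exact HT|apply Par_conv; auto].
        * contradiction.
      + exists (App (App (App Ct z1) x1) y1); split.
        { repeat apply P_app; auto; apply P_refl. }
        intros b Hb. destruct (par_C3 _ _ _ _ Hb) as [[z' [x' [y' [-> [H1 [H2 H3]]]]]]|[[H _]|[[H _]|[_ [H _]]]]].
        * repeat apply P_app; auto. apply P_refl.
        * exfalso; apply HT; auto.
        * contradiction.
        * exfalso; apply HT; auto. }
  destruct (classic (exists x, s = App Kt x)) as [[x ->]|Hk].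
  { simpl in Ha.
    destruct (IHn x ltac:(lia)) as [x1 [Hx1 Hx]].
    exists x1; split. apply P_K; auto.
    intros b Hb. destruct (par_K2 _ _ _ Hb) as [[x' [y' [-> [H1 H2]]]]|H]; auto.
    apply P_K; auto. }
  destruct (classic (exists x y, s = App (App St x) y)) as [[x [y ->]]|Hs].
  { simpl in Ha.
    destruct (IHn x ltac:(lia)) as [x1 [Hx1 Hx]].
    destruct (IHn y ltac:(lia)) as [y1 [Hy1 Hy]].
    destruct (IHn t ltac:(lia)) as [z1 [Hz1 Hz]].
    exists (App (App x1 z1) (App y1 z1)); split. apply P_S; auto.
    intros b Hb. destruct (par_S3 _ _ _ _ Hb) as [x' [y' [z' [H1 [H2 [H3 [->| ->]]]]]]].
    - apply P_S; auto.
    - repeat apply P_app; auto. }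
  destruct (IHn s ltac:(lia)) as [s1 [Hs1 Hs']].
  destruct (IHn t ltac:(lia)) as [t1 [Ht1 Ht']].
  exists (App s1 t1); split. apply P_app; auto.
  intros b Hb. inversion Hb; subst.
  - apply P_app; auto.
  - apply P_app; auto.
  - exfalso; apply Hc; eauto.
  - exfalso; apply Hc; eauto.
  - exfalso; apply Hc; eauto.
  - exfalso; apply Hk; eauto.
  - exfalso; apply Hs; eauto.
Qed.

Lemma diamond a b c : Par a b -> Par a c -> exists d, Par b d /\ Par c d.
Proof.
  intros Hb Hc. destruct (triangle (S (size a)) a ltac:(lia)) as [a' [_ H]].
  exists a'; auto.
Qed.

Lemma strip a c : clos_refl_trans term Par a c -> forall b, Par a b ->
  exists d, clos_refl_trans term Par b d /\ Par c d.
Proof.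
  intro H; induction H; intros b Hb.
  - destruct (diamond _ _ _ Hb H) as [d [H1 H2]]. exists d; split; auto. apply rt_step; auto.
  - exists b; split; auto. apply rt_refl.
  - destruct (IHclos_refl_trans1 b Hb) as [d1 [H1 H2]].
    destruct (IHclos_refl_trans2 d1 H2) as [d2 [H3 H4]].
    exists d2; split; auto. eapply rt_trans; eauto.
Qed.

Lemma par_confl a b c : clos_refl_trans term Par a b -> clos_refl_trans term Par a c ->
  exists d, clos_refl_trans term Par b d /\ clos_refl_trans term Par c d.
Proof.
  intro H; revert c; induction H; intros c Hc.
  - destruct (strip _ _ Hc y H) as [d [H1 H2]]. exists d; split; auto. apply rt_step; auto.
  - exists c; split; auto. apply rt_refl.
  - destruct (IHclos_refl_trans1 c Hc) as [d1 [H1 H2]].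
    destruct (IHclos_refl_trans2 d1 H1) as [d2 [H3 H4]].
    exists d2; split; auto. eapply rt_trans; eauto.
Qed.

Lemma rt_R_Par a b : clos_refl_trans term R_step a b -> clos_refl_trans term Par a b.
Proof.
  intro H; induction H. apply rt_step, step_Par; auto. apply rt_refl. eapply rt_trans; eauto.
Qed.

Lemma rt_Par_R a b : clos_refl_trans term Par a b -> clos_refl_trans term R_step a b.
Proof.
  intro H; induction H. apply Par_red; auto. apply rt_refl. eapply rt_trans; eauto.
Qed.

Theorem mainTheorem6 : confluent_rel R_step.
Proof.
  intros a b c Hb Hc.
  destruct (par_confl a b c (rt_R_Par _ _ Hb) (rt_R_Par _ _ Hc)) as [d [H1 H2]].
  exists d; split; apply rt_Par_R; auto.
Qed.
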